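(* Let $\psi$ be an existential formula in the first-order language with equality over one binary relation symbol $R$, using only the variables $x,y,z$. Let $v:\{x,y,z\}\to Q$ and $w:\{x,y,z\}\to P$ be alike assignments. If $(Q,T)\models\psi[v]$ then $(P,Z)\models\psi[w]$.
   Context: $(P,Z)$: $P=\{0,1,2,3,4\}$, $Z=\{(i,j): i<5,\ j\equiv i\pm1 \pmod 5\}$. $(Q,T)$: $Q=\{0,1,2,3\}$, $T=\{(i,j): i<4,\ j\equiv i\pm1 \pmod 4\}$. An existential formula is one built from atomic formulas ($Ruv$ or $u=v$) and negations of atomic formulas using only conjunction, disjunction and existential quantification; ''using only the variables $x,y,z$'' means every variable occurring, free or bound, is among $x,y,z$. Assignments $v$ into $Q$ and $w$ into $P$ are alike if the map sending $v(u)\mapsto w(u)$ for $u\in\{x,y,z\}$ is a well-defined bijection from the range of $v$ onto the range of $w$ which is an isomorphism between the induced substructures of $(Q,T)$ and $(P,Z)$ on these ranges. *)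

(* Defs.v *)
From mathcomp Require Import all_boot.
Set Implicit Arguments. Unset Strict Implicit. Unset Printing Implicit Defensive.

Inductive var := vx | vy | vz.

Definition var_eqb (a b : var) : bool :=
  match a, b with
  | vx, vx | vy, vy | vz, vz => true
  | _, _ => false
  end.

(* Existential formulas over one binary relation symbol R using only the
   variables x, y, z: atomic formulas R u v, u = v, their negations, closed
   under conjunction, disjunction and existential quantification. *)
Inductive eform :=
  | FRel   (u v : var)
  | FEq    (u v : var)
  | FNRel  (u v : var)
  | FNEq   (u v : var)
  | FAnd   (f g : eform)
  | FOr    (f g : eform)
  | FEx    (u : var) (f : eform).

Definition upd (D : Type) (a : var -> D) (u : var) (d : D) : var -> D :=
  fun u' => if var_eqb u u' then d else a u'.

Fixpoint sat (D : Type) (Rel : D -> D -> Prop) (a : var -> D) (f : eform)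
  : Prop :=
  match f with
  | FRel u v => Rel (a u) (a v)
  | FEq u v => a u = a v
  | FNRel u v => ~ Rel (a u) (a v)
  | FNEq u v => a u <> a v
  | FAnd f g => sat Rel a f /\ sat Rel a g
  | FOr f g => sat Rel a f \/ sat Rel a g
  | FEx u f => exists d : D, sat Rel (upd a u d) f
  end.

Definition cyc (n : nat) (i j : 'I_n) : Prop :=
  j %% n = (i + 1) %% n \/ (j + 1) %% n = i %% n.

Definition Z5 : 'I_5 -> 'I_5 -> Prop := @cyc 5.
Definition T4 : 'I_4 -> 'I_4 -> Prop := @cyc 4.

(* v into (D1,R1) and w into (D2,R2) are alike: the map v(u) |-> w(u)
   (u in {x,y,z}) is well defined, is a bijection from range v onto range w,
   and is an isomorphism between the induced substructures on these ranges. *)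
Definition alike (D1 D2 : Type) (R1 : D1 -> D1 -> Prop) (R2 : D2 -> D2 -> Prop)
  (v : var -> D1) (w : var -> D2) : Prop :=
  (forall u u', v u = v u' -> w u = w u') /\
  (* injective (surjectivity onto range w is automatic) *)
  (forall u u', w u = w u' -> v u = v u') /\
  (forall u u', R1 (v u) (v u') <-> R2 (w u) (w u')).

(* Main.v *)
Require Import Defs.
From mathcomp Require Import all_boot.

Definition cycb (n i j : nat) : bool :=
  (j %% n == (i + 1) %% n) || ((j + 1) %% n == i %% n).

Lemma cycP n (i j : 'I_n) : cyc i j <-> cycb n i j.
Proof. rewrite /cyc /cycb; split => [[]/eqP->|/orP[]/eqP]; rewrite ?eqxx ?orbT //; by [left|right]. Qed.

Definition vars := [:: vx; vy; vz].

Definition alikeb (f g : var -> nat) : bool :=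
  all (fun u => all (fun u' =>
    ((f u == f u') == (g u == g u')) && (cycb 4 (f u) (f u') == cycb 5 (g u) (g u'))) vars) vars.

Definition mk (a b c : nat) : var -> nat :=
  fun u => match u with vx => a | vy => b | vz => c end.

Definition checker : bool :=
  all (fun a => all (fun b => all (fun c => all (fun a' => all (fun b' => all (fun c' =>
    alikeb (mk a b c) (mk a' b' c') ==>
    all (fun u => all (fun d => has (fun e =>
       alikeb (upd (mk a b c) u d) (upd (mk a' b' c') u e)) (iota 0 5)) (iota 0 4)) vars)
  (iota 0 5)) (iota 0 5)) (iota 0 5)) (iota 0 4)) (iota 0 4)) (iota 0 4).

Lemma checker_ok : checker. Proof. vm_compute. reflexivity. Qed.

Lemma var_all (P : var -> bool) : all P vars -> forall u, P u.
Proof. by case/andP=> ? /andP[? /andP[? _]] []. Qed.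

Lemma alikebP f g : alikeb f g <-> forall u u',
  ((f u == f u') == (g u == g u')) && (cycb 4 (f u) (f u') == cycb 5 (g u) (g u')).
Proof.
split.
- move=> H u u'. have := var_all _ H u. by move/(var_all _)/(_ u').
- by move=> K; rewrite /alikeb /= !K.
Qed.

Lemma alikeP (v : var -> 'I_4) (w : var -> 'I_5) :
  alike T4 Z5 v w <-> alikeb (fun u => val (v u)) (fun u => val (w u)).
Proof.
split.
- move=> [H1 [H2 H3]]; apply/alikebP => u u'.
  apply/andP; split.
  + apply/eqP; apply/idP/idP => /eqP E; apply/eqP; congr val;
      [apply: H1|apply: H2]; exact: val_inj.
  + apply/eqP; apply/idP/idP => /cycP H; apply/cycP; by apply H3.
- move/alikebP => K.
  split; [|split] => u u'; have /andP[/eqP E1 /eqP E2] := K u u'.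
  + by move=> E; apply/val_inj/eqP; rewrite -E1 E eqxx.
  + by move=> E; apply/val_inj/eqP; rewrite E1 E eqxx.
  + by split => /cycP H; apply/cycP; rewrite ?E2 // -E2.
Qed.

Lemma all_iota (P : pred nat) n x : all P (iota 0 n) -> x < n -> P x.
Proof. by move/allP => H Hx; apply: H; rewrite mem_iota. Qed.
Arguments all_iota {P n x}.

Lemma ext (v : var -> 'I_4) (w : var -> 'I_5) u (d : 'I_4) :
  alike T4 Z5 v w -> exists e : 'I_5, alike T4 Z5 (upd v u d) (upd w u e).
Proof.
move=> /alikeP H.
have C := checker_ok; rewrite /checker in C.
have {C}C := all_iota C (ltn_ord (v vx)).
have {C}C := all_iota C (ltn_ord (v vy)).
have {C}C := all_iota C (ltn_ord (v vz)).
have {C}C := all_iota C (ltn_ord (w vx)).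
have {C}C := all_iota C (ltn_ord (w vy)).
have {C}C := all_iota C (ltn_ord (w vz)).
move: C => /implyP /(_ H) C.
have {C}C := var_all _ C u.
have {C}C := all_iota C (ltn_ord d).
move: C => /hasP [e He He2].
have e5 : e < 5 by move: He; rewrite mem_iota.
exists (Ordinal e5); apply/alikeP.
by case: u He2 => He2; exact He2.
Qed.

Theorem mainTheorem4 (psi : eform) (v : var -> 'I_4) (w : var -> 'I_5) :
  alike T4 Z5 v w -> sat T4 v psi -> sat Z5 w psi.
Proof.
elim: psi v w => [a b|a b|a b|a b|f IHf g IHg|f IHf g IHg|u f IH] v w Hal /=;
  have [H1 [H2 H3]] := Hal.
- by move/H3.
- by move/H1.
- by move=> N R; apply: N; apply/H3.
- by move=> N E; apply: N; apply: H2.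
- by move=> [? ?]; split; [apply: (IHf v)|apply: (IHg v)].
- by move=> [?|?]; [left; apply: (IHf v)|right; apply: (IHg v)].
- move=> [d Hd]. have [e He] := @ext v w u d Hal. exists e. exact: (IH _ _ He).
Qed.
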